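(* Let $\Gamma=\langle x,y\mid xy^{-1}=yx^{-1}\rangle$ with generating set $\Delta=\{x,y\}$. The operator $W=W_xU_x+W_yU_y$ on $\ell^2(\Gamma)$ is a homogeneous scalar quantum walk on $C_\Delta(\Gamma)$ if and only if, up to a global phase, $W_x=\cos\phi$ and $W_y=i\sin\phi$ for some real $\phi$ (with both values nonzero). In particular, a homogeneous scalar quantum walk on $C_\Delta(\Gamma)$ exists.
   Context: The Cayley graph $C_\Delta(\Gamma)$ has vertex set $\Gamma$ and directed edges $(g,g\delta)$, $g\in\Gamma,\delta\in\Delta$. Let $\ell^2(\Gamma)$ have orthonormal basis $\{|g\rangle\}_{g\in\Gamma}$ and for $\delta\in\Gamma$ let $U_\delta|g\rangle=|g\delta\rangle$. A homogeneous scalar quantum walk on $C_\Delta(\Gamma)$ is a unitary operator $W=\sum_{\delta\in\Delta}W_\delta U_\delta$ with all complex coefficients $W_\delta$ nonzero. ''Up to a global phase'' means that all coefficients may be multiplied by a common complex number of modulus one. *)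

(* Defs.v *)
From HB Require Import structures.
From mathcomp Require Import all_boot all_order all_algebra.
From mathcomp Require Import all_classical all_reals.
From mathcomp Require Import ereal esum trigo.
From mathcomp Require Import complex.
Set Implicit Arguments. Unset Strict Implicit. Unset Printing Implicit Defensive.
Import Order.TTheory GRing.Theory Num.Theory.
Local Open Scope ring_scope.

Record grp := Grp {
  gcar :> choiceType;  (* harmless: every type is a choiceType classically (boolp) *)
  gmul : gcar -> gcar -> gcar;
  ginv : gcar -> gcar;
  gone : gcar;
  gmulA : forall a b c, gmul a (gmul b c) = gmul (gmul a b) c;
  gmul1 : forall a, gmul gone a = a;
  gmulV : forall a, gmul (ginv a) a = gone
}.

Definition is_hom (G H : grp) (phi : G -> H) : Prop :=
  forall a b : G, phi (gmul a b) = gmul (phi a) (phi b).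

Definition rel_xy (H : grp) (a b : H) : Prop :=
  gmul a (ginv b) = gmul b (ginv a).

(* (G, x, y) is the group presented by < x, y | x y^{-1} = y x^{-1} >:
   the relation holds in G, and G has the universal property of the presentation. *)
Definition presents_Gamma (G : grp) (x y : G) : Prop :=
  rel_xy x y /\
  forall (H : grp) (a b : H), rel_xy a b ->
    (exists phi : G -> H, is_hom phi /\ phi x = a /\ phi y = b) /\
    (forall phi psi : G -> H, is_hom phi -> is_hom psi ->
       phi x = a -> phi y = b -> psi x = a -> psi y = b ->
       forall g, phi g = psi g).

Section L2.
Variables (R : realType) (G : grp).
Local Notation C := R[i].

Definition sqmod (z : C) : R := (complex.Re z) ^+ 2 + (complex.Im z) ^+ 2.

Definition l2sqnorm (f : G -> C) : \bar R :=
  (\esum_(g in [set: G]) (sqmod (f g))%:E)%R.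

Definition in_l2 (f : G -> C) : Prop := (l2sqnorm f < +oo)%E.

(* A unitary operator on l^2(G): a norm-preserving map of l^2(G) onto l^2(G)
   (the operators considered below are linear). *)
Definition unitary_l2 (A : (G -> C) -> (G -> C)) : Prop :=
  (forall f, in_l2 f -> l2sqnorm (A f) = l2sqnorm f) /\
  (forall h, in_l2 h -> exists f, in_l2 f /\ A f = h).

(* U_d |g> = |g d>, i.e. (U_d f)(h) = f(h d^{-1}). *)
Definition Ushift (d : G) (f : G -> C) : G -> C := fun h => f (gmul h (ginv d)).

(* W = sum_{(d, W_d) in Delta} W_d U_d  (Delta: list of generator/coefficient
   pairs, generators assumed pairwise distinct) *)
Definition walk_op (Delta : seq (G * C)) (f : G -> C) : G -> C :=
  fun h => \sum_(p <- Delta) p.2 * Ushift p.1 f h.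

Definition is_HSQW (Delta : seq (G * C)) : Prop :=
  all (fun p => p.2 != 0) Delta /\ unitary_l2 (walk_op Delta).
End L2.

(* Main.v *)
Require Import Defs.
From HB Require Import structures.
From mathcomp Require Import all_boot all_order all_algebra.
From mathcomp Require Import all_classical all_reals.
From mathcomp Require Import ereal esum trigo.
From mathcomp Require Import complex.
From mathcomp Require Import ring lra.
Import Order.TTheory GRing.Theory Num.Theory.
Local Open Scope ring_scope.
Local Open Scope complex_scope.

Lemma id2 (R : realType) (a b u v : R[i]) :
  sqmod a + sqmod b = 1 -> complex.Re a * complex.Re b + complex.Im a * complex.Im b = 0 ->
  sqmod (a * u + b * v) + sqmod (a * v + b * u) = sqmod u + sqmod v.
Proof.
case: a => a1 a2; case: b => b1 b2; case: u => u1 u2; case: v => v1 v2.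
rewrite /sqmod /= => h1 h2.
apply/eqP; rewrite -subr_eq0; apply/eqP.
transitivity ((a1 ^+ 2 + a2 ^+ 2 + (b1 ^+ 2 + b2 ^+ 2) - 1) * (u1^+2+u2^+2+v1^+2+v2^+2)
   + 4 * (u1*v1+u2*v2) * (a1 * b1 + a2 * b2)); first ring.
by rewrite h1 h2 subrr; ring.
Qed.

Lemma id3 (R : realType) (a b u w : R[i]) :
  sqmod a + sqmod b = 1 -> complex.Re a * complex.Re b + complex.Im a * complex.Im b = 0 ->
  a * (a^* * u + b^* * w) + b * (a^* * w + b^* * u) = u.
Proof.
case: a => a1 a2; case: b => b1 b2; case: u => u1 u2; case: w => v1 v2.
rewrite /sqmod /= => h1 h2.
apply/eqP; rewrite eq_complex /=; apply/andP; split; rewrite -subr_eq0; apply/eqP.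
  transitivity ((a1 ^+ 2 + a2 ^+ 2 + (b1 ^+ 2 + b2 ^+ 2) - 1) * u1 + 2 * (a1 * b1 + a2 * b2) * v1); first ring.
  by rewrite h1 h2 subrr; ring.
transitivity ((a1 ^+ 2 + a2 ^+ 2 + (b1 ^+ 2 + b2 ^+ 2) - 1) * u2 + 2 * (a1 * b1 + a2 * b2) * v2); first ring.
by rewrite h1 h2 subrr; ring.
Qed.

Section GrpFacts.
Variable G : grp.
Implicit Types a b c d h k : G.

Lemma mulgV' a : gmul a (ginv a) = gone G.
Proof.
have e : gmul (ginv (ginv a)) (ginv a) = gone G := gmulV _.
transitivity (gmul (gmul (ginv (ginv a)) (ginv a)) (gmul a (ginv a))).
  by rewrite e gmul1.
by rewrite -gmulA (gmulA (ginv a) a) gmulV gmul1.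
Qed.

Lemma mulg1' a : gmul a (gone G) = a.
Proof. by rewrite -(gmulV a) gmulA mulgV' gmul1. Qed.

Lemma mulgKV' h d : gmul (gmul h (ginv d)) d = h.
Proof. by rewrite -gmulA gmulV mulg1'. Qed.

Lemma mulgK' h d : gmul (gmul h d) (ginv d) = h.
Proof. by rewrite -gmulA mulgV' mulg1'. Qed.

Lemma mulg_canl a b c : gmul a b = gmul a c -> b = c.
Proof. by move=> e; rewrite -(gmul1 b) -(gmulV a) -gmulA e gmulA gmulV gmul1. Qed.

Lemma mul_eq1 h d : gmul h (ginv d) = gone G -> h = d.
Proof. by move=> e; rewrite -(mulgKV' h d) e gmul1. Qed.

End GrpFacts.

Section EsumFacts.
Variable R : realType.

Lemma esum_shift (G : grp) (d : G) (F : G -> \bar R) :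
  \esum_(h in [set: G]) F h = \esum_(k in [set: G]) F (gmul k d).
Proof.
apply: reindex_esum; rewrite setTT_bijective.
by exists (fun k => gmul k (ginv d)) => k; [apply: mulgK' | apply: mulgKV'].
Qed.

Lemma esum_invol (T : choiceType) (p : T -> T) (F : T -> \bar R) :
  involutive p -> \esum_(k in [set: T]) F k = \esum_(k in [set: T]) F (p k).
Proof.
move=> ip; apply: reindex_esum; rewrite setTT_bijective.
by exists p.
Qed.

Lemma double_cancel (u v : \bar R) : (0 <= u)%E -> (0 <= v)%E -> (u + u = v + v)%E -> u = v.
Proof.
case: u => [r| |]; case: v => [s| |] //= r0 s0.
move=> [] e; congr (_%:E); lra.
Qed.

Lemma pair_esum (T : choiceType) (p : T -> T) (F H : T -> \bar R) :
  involutive p -> (forall k, (0 <= F k)%E) -> (forall k, (0 <= H k)%E) ->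
  (forall k, (F k + F (p k) = H k + H (p k))%E) ->
  \esum_(k in [set: T]) F k = \esum_(k in [set: T]) H k.
Proof.
move=> ip F0 H0 e.
apply: double_cancel; try by apply: esum_ge0.
have e1 := @esum_invol _ p F ip; have e2 := @esum_invol _ p H ip.
rewrite {2}e1 {2}e2 -!esumD //; by apply: eq_esum => k _.
Qed.

Lemma esum1pt (T : choiceType) (u : T) (c : \bar R) : (0 <= c)%E ->
  \esum_(i in [set: T]) (if i == u then c else 0%E) = c.
Proof.
move=> c0; rewrite -[RHS](@esum_set1 R T u (fun _ => c)) // [RHS]esum_mkcond.
by apply: eq_esum => i _; rewrite in_set1.
Qed.

Lemma esum2pt (T : choiceType) (u v : T) (g : T -> \bar R) : u != v ->
  (forall i, (0 <= g i)%E) -> (forall i, i != u -> i != v -> g i = 0%E) ->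
  \esum_(i in [set: T]) g i = (g u + g v)%E.
Proof.
move=> uv g0 gz.
transitivity (\esum_(i in [set: T]) ((if i == u then g u else 0%E) + (if i == v then g v else 0%E))%E).
  apply: eq_esum => i _.
  case: (eqVneq i u) => [->|iu]; first by rewrite (negbTE uv) adde0.
  case: (eqVneq i v) => [->|iv]; first by rewrite add0e.
  by rewrite gz // adde0.
rewrite esumD; last 2 first.
- by move=> i _; case: ifP.
- by move=> i _; case: ifP.
by rewrite !esum1pt.
Qed.

End EsumFacts.

Lemma sqmod_ge0 (R : realType) (z : R[i]) : 0 <= sqmod z.
Proof. by rewrite /sqmod addr_ge0 // sqr_ge0. Qed.

Lemma sqmod_conj (R : realType) (z : R[i]) : sqmod z^* = sqmod z.
Proof. by case: z => z1 z2; rewrite /sqmod /=; ring. Qed.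

Lemma re_conj (R : realType) (a b : R[i]) :
  complex.Re a^* * complex.Re b^* + complex.Im a^* * complex.Im b^* =
  complex.Re a * complex.Re b + complex.Im a * complex.Im b.
Proof. by case: a => a1 a2; case: b => b1 b2 /=; ring. Qed.

Section Walk.
Variables (R : realType) (G : grp) (x y : G).
Hypothesis rxy : rel_xy x y.
Local Notation t := (gmul x (ginv y)).

Lemma walkE (a b : R[i]) f h :
  walk_op [:: (x, a); (y, b)] f h = a * f (gmul h (ginv x)) + b * f (gmul h (ginv y)).
Proof. by rewrite /walk_op !big_cons big_nil addr0. Qed.

Lemma tx : gmul t x = y.
Proof. by rewrite rxy mulgKV'. Qed.

Lemma ty : gmul t y = x.
Proof. by rewrite mulgKV'. Qed.

Lemma tt : gmul t t = gone G.
Proof. by rewrite {2}rxy gmulA mulgKV' mulgV'. Qed.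

Lemma tinv k : gmul (gmul k t) t = k.
Proof. by rewrite -gmulA tt mulg1'. Qed.

Lemma invol_t : involutive (fun k => gmul k t).
Proof. exact: tinv. Qed.

Lemma xy_comm : gmul (ginv y) x = gmul (ginv x) y.
Proof.
apply: (@mulg_canl _ y).
by rewrite gmulA mulgV' gmul1 gmulA -rxy mulgKV'.
Qed.

Variables (a b : R[i]).
Hypotheses (h1 : sqmod a + sqmod b = 1)
  (h2 : complex.Re a * complex.Re b + complex.Im a * complex.Im b = 0).

Lemma walk_norm f :
  l2sqnorm (walk_op [:: (x, a); (y, b)] f) = l2sqnorm f.
Proof.
rewrite /l2sqnorm (@esum_shift R G x).
apply: (@pair_esum R G _ _ _ invol_t) => [k|k|k]; rewrite ?lee_fin ?sqmod_ge0 //.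
rewrite !walkE mulgK' -gmulA.
have -> : gmul (gmul (gmul k t) x) (ginv y) = k by rewrite -gmulA tinv.
by rewrite mulgK' -!EFinD id2.
Qed.

Lemma walk_surj h : in_l2 h ->
  exists f, in_l2 f /\ walk_op [:: (x, a); (y, b)] f = h.
Proof.
move=> hl2.
pose f k := a^* * h (gmul k x) + b^* * h (gmul (gmul k t) x).
exists f; split.
  rewrite /in_l2; suff -> : l2sqnorm f = l2sqnorm h by [].
  rewrite /l2sqnorm [RHS](@esum_shift R G x).
  apply: (@pair_esum R G _ _ _ invol_t) => [k|k|k]; rewrite ?lee_fin ?sqmod_ge0 //.
  rewrite /f tinv -EFinD id2 ?EFinD // ?sqmod_conj // re_conj //.
apply: funext => g; rewrite walkE /f.
rewrite !mulgKV'.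
have -> : gmul (gmul (gmul g (ginv x)) t) x = gmul (gmul g (ginv y)) x.
  by rewrite -(gmulA _ t x) tx -!gmulA xy_comm.
have -> : gmul (gmul (gmul g (ginv y)) t) x = g.
  by rewrite -(gmulA _ t x) tx mulgKV'.
exact: id3.
Qed.
End Walk.

Section Necessity.
Variables (R : realType) (G : grp) (x y : G).
Hypothesis rxy : rel_xy x y.
Hypothesis xny : x != y.
Local Notation t := (gmul x (ginv y)).
Local Notation e := (gone G).

Lemma sqmod1 : sqmod (1 : R[i]) = 1.
Proof. by rewrite /sqmod /= expr1n expr0n addr0. Qed.

Lemma sqmod0 : sqmod (0 : R[i]) = 0.
Proof. by rewrite /sqmod /= expr0n addr0. Qed.

Lemma te : t != e.
Proof. by apply: contra xny => /eqP /mul_eq1 ->. Qed.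

Variables (a b : R[i]).
Hypothesis hn : forall f, in_l2 f ->
  l2sqnorm (walk_op [:: (x, a); (y, b)] f) = l2sqnorm f.

Let d1 (g : G) : R[i] := if g == e then 1 else 0.
Let d2 (g : G) : R[i] := (if g == e then 1 else 0) + (if g == t then 1 else 0).

Lemma nd1 : l2sqnorm d1 = 1%E.
Proof.
rewrite /l2sqnorm -[RHS](@esum1pt R G e) //.
by apply: eq_esum => g _; rewrite /d1; case: ifP => _; rewrite ?sqmod1 ?sqmod0.
Qed.

Lemma nd2 : l2sqnorm d2 = 2%:E.
Proof.
rewrite /l2sqnorm (@esum2pt R G e t); first last.
- move=> g ge gt; rewrite /d2 (negbTE ge) (negbTE gt) addr0 sqmod0 //.
- by move=> g; rewrite lee_fin sqmod_ge0.
- by rewrite eq_sym te.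
rewrite /d2 eqxx (negbTE te) eq_sym (negbTE te) eqxx addr0 add0r sqmod1 -EFinD.
by [].
Qed.

Lemma nec1 : sqmod a + sqmod b = 1.
Proof.
have := @hn d1; rewrite nd1 => /(_ ltac:(by rewrite /in_l2 nd1 ltry)).
rewrite /l2sqnorm (@esum2pt R G x y) //; first last.
- move=> g gx gy; rewrite walkE /d1.
  have -> : (gmul g (ginv x) == e) = false.
    by apply/negbTE; apply: contra gx => /eqP /mul_eq1 ->.
  have -> : (gmul g (ginv y) == e) = false.
    by apply/negbTE; apply: contra gy => /eqP /mul_eq1 ->.
  by rewrite !mulr0 addr0 sqmod0.
- by move=> g; rewrite lee_fin sqmod_ge0.
rewrite !walkE /d1 !mulgV' eqxx (negbTE te) -rxy (negbTE te) !mulr0 !mulr1 addr0 add0r.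
by rewrite -EFinD => /eqP; rewrite eqe => /eqP.
Qed.

Lemma nec2 : complex.Re a * complex.Re b + complex.Im a * complex.Im b = 0.
Proof.
have := @hn d2; rewrite nd2 => /(_ ltac:(by rewrite /in_l2 nd2 ltry)).
rewrite /l2sqnorm (@esum2pt R G x y) //; first last.
- move=> g gx gy; rewrite walkE /d2.
  have -> : (gmul g (ginv x) == e) = false.
    by apply/negbTE; apply: contra gx => /eqP /mul_eq1 ->.
  have -> : (gmul g (ginv y) == e) = false.
    by apply/negbTE; apply: contra gy => /eqP /mul_eq1 ->.
  have -> : (gmul g (ginv x) == t) = false.
    apply/negbTE; apply: contra gy => /eqP E.
    by rewrite -(@mulgKV' _ g x) E rxy mulgKV'.
  have -> : (gmul g (ginv y) == t) = false.
    apply/negbTE; apply: contra gx => /eqP E.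
    by rewrite -(@mulgKV' _ g y) E mulgKV'.
  by rewrite !addr0 !mulr0 addr0 sqmod0.
- by move=> g; rewrite lee_fin sqmod_ge0.
rewrite !walkE /d2 !mulgV' eqxx (negbTE te) -rxy (negbTE te) eqxx eq_sym (negbTE te).
rewrite !addr0 !add0r !mulr1 -EFinD => /eqP; rewrite eqe => /eqP E.
have := nec1.
move: E; case: a => a1 a2; case: b => b1 b2; rewrite /sqmod /= => E1 E2.
lra.
Qed.

End Necessity.

Lemma construct (R : realType) (a b : R[i]) : a != 0 -> b != 0 ->
  sqmod a + sqmod b = 1 ->
  complex.Re a * complex.Re b + complex.Im a * complex.Im b = 0 ->
  exists (c : R[i]) (phi : R),
       sqmod c = 1 /\ cos phi != 0 /\ sin phi != 0 /\
       a = c * (cos phi)%:C /\ b = c * ('i * (sin phi)%:C).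
Proof.
case: a => a1 a2; case: b => b1 b2 an0 bn0; rewrite /sqmod /= => h1 h2.
set v := a1 ^+ 2 + a2 ^+ 2.
set w := b1 ^+ 2 + b2 ^+ 2.
rewrite -/v -/w in h1.
have w0 : 0 <= w by rewrite addr_ge0 // sqr_ge0.
have v0 : 0 < v.
  rewrite lt_def addr_ge0 ?sqr_ge0 // andbT; apply: contra an0.
  rewrite paddr_eq0 ?sqr_ge0 // !sqrf_eq0 => /andP[/eqP -> /eqP ->] //.
have wp : 0 < w.
  rewrite lt_def w0 andbT; apply: contra bn0.
  rewrite paddr_eq0 ?sqr_ge0 // !sqrf_eq0 => /andP[/eqP -> /eqP ->] //.
set r := Num.sqrt v.
have rv : r ^+ 2 = v by rewrite sqr_sqrtr // ltW.
have r0 : 0 < r by rewrite sqrtr_gt0.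
have rn0 : r != 0 by rewrite gt_eqF.
have r1 : r <= 1.
  rewrite /r -sqrtr1 ler_sqrt //; lra.
set s := (a1 * b2 - a2 * b1) / r.
have sw : s ^+ 2 = w.
  rewrite /s expr_div_n rv.
  have -> : (a1 * b2 - a2 * b1) ^+ 2 = v * w - (a1 * b1 + a2 * b2) ^+ 2 by rewrite /v /w; ring.
  by rewrite h2 expr0n /= subr0 mulrC mulKf // gt_eqF.
have rin : -1 <= r <= 1 by apply/andP; split => //; lra.
pose phi := if 0 <= s then acos r else - acos r.
have cphi : cos phi = r by rewrite /phi; case: ifP => _; rewrite ?cosN acosK // inE.
have sphi : sin phi = s.
  have sa : sin (acos r) = `|s| by rewrite sin_acos // rv (_ : 1 - v = w) ?sqrtr_sqr -?sw ?sqrtr_sqr //; lra.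
  by rewrite /phi; case: ifP => s0; rewrite ?sinN sa; [rewrite ger0_norm | rewrite ltr0_norm ?opprK // ltNge s0].
exists ((a1 / r) +i* (a2 / r)), phi; rewrite cphi sphi; split; [|split; [|split; [|split]]].
- rewrite /sqmod /= !expr_div_n rv -mulrDl divff //; by rewrite gt_eqF.
- exact: rn0.
- apply/eqP => s0; move: sw; rewrite s0 expr0n /= => w00; by rewrite -w00 ltxx in wp.
- apply/eqP; rewrite eq_complex /=; apply/andP; split; apply/eqP.
    by rewrite mulr0 subr0 divfK.
  by rewrite mulr0 add0r divfK.
- apply/eqP; rewrite eq_complex /=; apply/andP; split; apply/eqP.
    have E : b1 * v = - a2 * (a1 * b2 - a2 * b1).
      by rewrite -[LHS]subr0 -(mulr0 a1) -h2 /v; ring.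
    rewrite -[b1](mulfK (negbT (gt_eqF v0))) E -rv /s; field; exact: rn0.
  have E : b2 * v = a1 * (a1 * b2 - a2 * b1).
    by rewrite -[LHS]subr0 -(mulr0 a2) -h2 /v; ring.
  rewrite -[b2](mulfK (negbT (gt_eqF v0))) E -rv /s; field; exact: rn0.
Qed.

Definition boolgrp : grp.
Proof.
refine (@Grp bool addb id false _ _ _).
- by move=> a b c; rewrite addbA.
- by move=> a; rewrite addFb.
- by move=> a; rewrite addbb.
Defined.

Lemma pres_neq (G : grp) (x y : G) : presents_Gamma x y -> x != y.
Proof.
move=> [_ U]; have [[phi [_ [px py]]] _] := U boolgrp true false erefl.
by apply/eqP => exy; move: px; rewrite exy py.
Qed.

Lemma sufficiency (R : realType) (G : grp) (x y : G) (a b : R[i]) :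
  rel_xy x y -> a != 0 -> b != 0 -> sqmod a + sqmod b = 1 ->
  complex.Re a * complex.Re b + complex.Im a * complex.Im b = 0 ->
  is_HSQW [:: (x, a); (y, b)].
Proof.
move=> rxy an bn h1 h2; split; first by rewrite /= an bn.
split => [f _|h hl]; first exact: walk_norm.
exact: walk_surj.
Qed.

Theorem mainTheorem2 (R : realType) (G : grp) (x y : G) :
  presents_Gamma x y ->
  (forall Wx Wy : R[i],
     is_HSQW [:: (x, Wx); (y, Wy)] <->
     exists (c : R[i]) (phi : R),
       sqmod c = 1 /\ cos phi != 0 /\ sin phi != 0 /\
       Wx = c * (cos phi)%:C /\ Wy = c * ('i * (sin phi)%:C)) /\
  (exists Wx Wy : R[i], is_HSQW [:: (x, Wx); (y, Wy)]).
Proof.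
move=> P; have xny := @pres_neq _ _ _ P; have rxy := P.1.
have iff : forall Wx Wy : R[i],
     is_HSQW [:: (x, Wx); (y, Wy)] <->
     exists (c : R[i]) (phi : R),
       sqmod c = 1 /\ cos phi != 0 /\ sin phi != 0 /\
       Wx = c * (cos phi)%:C /\ Wy = c * ('i * (sin phi)%:C).
  move=> Wx Wy; split.
    move=> [/= /and3P [an bn _] [hn _]].
    apply: construct => //.
      exact: (@nec1 R G x y rxy xny _ _ hn).
    exact: (@nec2 R G x y rxy xny _ _ hn).
  move=> [c [phi [c1 [cn [sn [-> ->]]]]]].
  have cn0 : c != 0 by apply/eqP => c0; move: c1; rewrite c0 sqmod0 => /eqP; rewrite eq_sym oner_eq0.
  apply: sufficiency => //.
  - rewrite mulf_neq0 //; rewrite eq_complex /= negb_and cn //.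
  - rewrite mulf_neq0 // mulf_neq0 //; first by rewrite eq_complex /= negb_and oner_eq0 orbT.
    by rewrite eq_complex /= negb_and sn.
  - move: c1; have := cos2Dsin2 phi; clear cn0; case: c => c1 c2; rewrite /sqmod /= => E1 E2.
    transitivity ((c1 ^+ 2 + c2 ^+ 2) * (cos phi ^+ 2 + sin phi ^+ 2)); first ring.
    by rewrite E1 E2 mulr1.
  - by case: c {c1 cn0} => c1 c2 /=; ring.
split => //.
exists ((cos (pi / 4 : R))%:C), ('i * (sin (pi / 4 : R))%:C).
apply/iff; exists 1, (pi / 4); rewrite !mul1r; split; first exact: sqmod1.
have p0 := @pi_gt0 R.
split; [|split; [|split]] => //.
  rewrite gt_eqF // cos_gt0_pihalf //; apply/andP; split; lra.
rewrite gt_eqF // sin_gt0_pihalf //; apply/andP; split; lra.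
Qed.
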